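(* The set $\{[A]\in\mathrm{MALG}: \text{there is no } D\in\boldsymbol{\Delta}^0_2 \text{ with } \mu(A\,\triangle\, D)=0\}$ is comeager in $\mathrm{MALG}$.
   Context: $2^\omega$ is the Cantor space; $\mu$ is the coin-tossing measure ($\mu(N_s)=2^{-\mathrm{lh}(s)}$, $N_s=\{x:s\subset x\}$). $\mathrm{MALG}$ is the measure algebra: the set of equivalence classes $[A]$ of $\mu$-measurable subsets of $2^\omega$ under $A\equiv B\iff\mu(A\triangle B)=0$, endowed with the complete separable metric $\delta([A],[B])=\mu(A\triangle B)$, which makes it a Polish space. $\boldsymbol{\Delta}^0_2$ is the class of sets that are simultaneously $F_\sigma$ and $G_\delta$. *)

(* Defs.v *)
From HB Require Import structures.
From mathcomp Require Import all_boot all_order all_algebra.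
From mathcomp Require Import all_classical all_reals all_analysis borel_hierarchy.
Set Implicit Arguments. Unset Strict Implicit. Unset Printing Implicit Defensive.
Import Order.TTheory GRing.Theory Num.Theory.
Import numFieldNormedType.Exports.
Local Open Scope classical_set_scope.
Local Open Scope ring_scope.

Definition BorelCantor := g_sigma_algebraType (@open cantor_space).

Definition cylinder (s : seq bool) : set cantor_space :=
  [set x | forall i, (i < size s)%N -> x i = nth false s i].

Definition symdiff {T} (A B : set T) : set T := (A `\` B) `|` (B `\` A).

Definition Delta02 (D : set cantor_space) : Prop := Fsigma D /\ Gdelta D.

Section MALG.
Context {R : realType} (mu : {measure set BorelCantor -> \bar R}).

(** MALG is the metric identification of the pseudometric space of measurable
    sets with delta(A,B) = mu (A symdiff B); open / dense / comeager sets of MALG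
    correspond to such sets of representatives, described here. *)
Definition malg_open (U : set (set BorelCantor)) : Prop :=
  (forall A, U A -> measurable A) /\
  forall A, U A -> exists2 e : R, 0 < e &
     forall B, measurable B -> (mu (symdiff A B) < e%:E)%E -> U B.

Definition malg_dense (U : set (set BorelCantor)) : Prop :=
  forall A, measurable A -> forall e : R, 0 < e ->
     exists2 B, U B & (mu (symdiff A B) < e%:E)%E.

Definition malg_comeager (S : set (set BorelCantor)) : Prop :=
  exists2 F : nat -> set (set BorelCantor),
    (forall n, malg_open (F n) /\ malg_dense (F n)) &
    (forall A, measurable A -> (forall n, F n A) -> S A).
End MALG.

(* Main.v *)
Require Import Defs.
From HB Require Import structures.
From mathcomp Require Import all_boot all_order all_algebra.
From mathcomp Require Import all_classical all_reals all_analysis borel_hierarchy.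
From mathcomp Require Import lra.
Import Order.TTheory GRing.Theory Num.Theory.
Import numFieldNormedType.Exports.
Local Open Scope classical_set_scope.
Local Open Scope ring_scope.

Definition cyl (x : cantor_space) (k : nat) : set cantor_space :=
  [set y | forall i, (i < k)%N -> y i = x i].

Lemma cyl_open x k : open (cyl x k).
Proof.
elim: k => [|k IH].
  rewrite (_ : cyl x 0 = setT); first exact: openT.
  by apply/seteqP; split => y //= _ i.
rewrite (_ : cyl x k.+1 = cyl x k `&` (fun y : cantor_space => y k) @^-1` [set x k]).
  apply: openI => //; apply: open_comp.
    move=> y _; exact: (@proj_continuous nat (fun _ => bool) k).
  exact: discrete_open.
apply/seteqP; split => y /=.
  by move=> H; split; [move=> i ik; apply: H; apply: ltnW|apply: H].
move=> [H1 H2] i; rewrite ltnS leq_eqVlt => /orP[/eqP->//|]; exact: H1.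
Qed.

Lemma open_cyl (U : set cantor_space) x : open U -> U x -> exists k, cyl x k `<=` U.
Proof.
move=> oU Ux; apply: contrapT => /forallNP H.
have H' k : exists y, cyl x k y /\ ~ U y.
  have := H k; move/existsNP => [y /not_implyP [Hy NU]]; by exists y.
have [y Hy] := choice H'.
have gcvg : y @ \oo --> x.
  apply/cvg_sup => N V [W] [[Z] oZ <-] ZfN ZV.
  apply: (filterS ZV); rewrite nbhs_simpl; exists N.+1 => // i /= Ni.
  by rewrite ((Hy i).1 N Ni).
have : \forall n \near \oo, U (y n).
  apply: gcvg; exact: open_nbhs_nbhs.
move=> [N _ HN]; exact: (Hy N).2 (HN N (leqnn N)).
Qed.
Lemma baire_cantor (C : nat -> set cantor_space) :
  (forall n, closed (C n)) -> (forall z, exists n, C n z) ->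
  exists n x k, cyl x k `<=` C n.
Proof.
move=> cC cov; apply: contrapT => /forallNP H.
have step n (p : cantor_space * nat) : exists q : cantor_space * nat,
    [/\ (p.2 < q.2)%N, cyl p.1 p.2 q.1 & cyl q.1 q.2 `<=` ~` C n].
  have := H n; move/forallNP => /(_ p.1) /forallNP /(_ p.2).
  move/existsNP => [y /not_implyP [Hy NC]].
  have oC : open (~` C n) by rewrite openC.
  have [m Hm] := open_cyl _ _ oC NC.
  exists (y, (maxn m p.2).+1); split => //=.
  - by rewrite ltnS leq_maxr.
  - move=> z Hz; apply: Hm => i im; apply: Hz.
    by apply: (leq_trans im); apply: leq_trans (leq_maxl _ _) (leqnSn _).
have [f Hf] := choice (fun np : nat * (cantor_space * nat) => step np.1 np.2).
pose p := fix p (n : nat) := if n is n'.+1 then f (n', p n') else (point, 0%N).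
have pS n : p n.+1 = f (n, p n) by [].
have agree n m : (n <= m)%N -> forall i, (i < (p n).2)%N -> (p m).1 i = (p n).1 i.
  elim: m => [|m IH]; first by rewrite leqn0 => /eqP->.
  rewrite leq_eqVlt => /orP[/eqP->//|]; rewrite ltnS => nm i iln.
  rewrite pS; have [lt12 c1 _] := Hf (m, p m).
  rewrite c1; first exact: IH.
  apply: (leq_trans iln); elim: m {IH c1 lt12} nm => [|m IHm]; first by rewrite leqn0 => /eqP->.
  rewrite leq_eqVlt => /orP[/eqP->//|]; rewrite ltnS => /IHm le.
  by apply: (leq_trans le); rewrite pS; have [/ltnW] := Hf (m, p m).
have kge n : (n <= (p n).2)%N.
  elim: n => [//|n IH]; rewrite pS; have [lt _ _] := Hf (n, p n).
  exact: leq_ltn_trans IH lt.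
pose z : cantor_space := fun i => (p i.+1).1 i.
have zin n : cyl (p n.+1).1 (p n.+1).2 z.
  move=> i ilt; rewrite /z.
  rewrite -(agree n.+1 (maxn i.+1 n.+1) (leq_maxr _ _) i ilt).
  rewrite (agree i.+1 (maxn i.+1 n.+1) (leq_maxl _ _) i) //.
have [n Cn] := cov z.
have := zin n; rewrite pS; have [_ _ c] := Hf (n, p n).
by move/c.
Qed.
Lemma cylinderE s : cylinder s = cyl (fun i => nth false s i) (size s).
Proof. by []. Qed.

Lemma open_meas (U : set BorelCantor) : open (U : set cantor_space) -> measurable U.
Proof. by move=> oU; apply: sub_sigma_algebra. Qed.

Lemma closed_meas (U : set BorelCantor) : closed (U : set cantor_space) -> measurable U.
Proof.
move=> cU; rewrite -(setCK U); apply: measurableC; apply: open_meas.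
by rewrite openC.
Qed.

Lemma cylinder_meas s : measurable (cylinder s : set BorelCantor).
Proof. by apply: open_meas; rewrite cylinderE; exact: cyl_open. Qed.

Lemma symdiff_meas {A B : set BorelCantor} : measurable A -> measurable B ->
  measurable (symdiff A B).
Proof. by move=> mA mB; apply: measurableU; apply: measurableD. Qed.

Lemma cylinder_cat s t : cylinder (s ++ t) `<=` cylinder s.
Proof.
move=> y Hy i ilt; rewrite Hy ?size_cat ?nth_cat ?ilt //.
exact: leq_trans ilt (leq_addr _ _).
Qed.

Lemma cylinder_disj s u v : cylinder (s ++ true :: u) `&` cylinder (s ++ false :: v) = set0.
Proof.
apply/seteqP; split => // y [H1 H2].
have := H1 (size s); have := H2 (size s).
rewrite !size_cat /= !nth_cat ltnn subnn /= addnS ltnS leq_addr => -> // H; suff : false = true by []; apply: H; rewrite -addSnnS leq_addr.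
by [].
Qed.

Definition Ncyl (s : seq bool) : set BorelCantor := cylinder s.

Section meas.
Context (R : realType) (mu : {measure set BorelCantor -> \bar R}).
Local Open Scope ereal_scope.

Lemma mu_le_zero {P Q S : set BorelCantor} : measurable P -> measurable Q -> measurable S ->
  P `<=` Q `|` S -> mu Q = 0%E -> mu P <= mu S.
Proof.
move=> mP mQ mS PQS Q0.
have mQS : measurable (Q `|` S) by exact: measurableU.
apply: (le_trans (le_measure mu _ _ PQS)); rewrite ?inE //.
apply: (le_trans (measureU2 mu mQ mS)). rewrite [X in X + _](_ : _ = 0%E) ?add0e //.
Qed.

Lemma pos_lb (a : \bar R) : 0 < a -> exists e : R, (0 < e)%R /\ e%:E <= a.
Proof.
case: a => [r| |] //.
- by move=> r0; exists r; split.
- by move=> _; exists 1%R; split => //; rewrite leey.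
Qed.


Definition Fs (s : seq bool) : set (set BorelCantor) :=
  [set A : set BorelCantor | measurable A /\ mu (A `&` Ncyl s) <> 0%E /\ mu (Ncyl s `\` A) <> 0%E].

Lemma Fs_open s : malg_open mu (Fs s).
Proof.
split; first by move=> A [].
move=> A [mA [h1 h2]].
have mN : measurable (Ncyl s) := cylinder_meas s.
have [e1 [e10 he1]] : exists e : R, (0 < e)%R /\ e%:E <= mu (A `&` Ncyl s).
  by apply: pos_lb; rewrite lt0e measure_ge0 andbT; apply/eqP.
have [e2 [e20 he2]] : exists e : R, (0 < e)%R /\ e%:E <= mu (Ncyl s `\` A).
  by apply: pos_lb; rewrite lt0e measure_ge0 andbT; apply/eqP.
exists (Num.min e1 e2); first by rewrite lt_min e10 e20.
move=> B mB hB; split => //; have mS := symdiff_meas mA mB; split.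
- move=> H0.
  have : mu (A `&` Ncyl s) <= mu (symdiff A B).
    apply: (mu_le_zero _ _ mS _ H0); [exact: measurableI|exact: measurableI|].
    move=> x [Ax Nx]; case: (pselect (B x)) => Bx; [left|right; left] => //.
  move=> le1; have := le_lt_trans (le_trans he1 le1) hB.
  by rewrite lte_fin lt_min ltxx.
- move=> H0.
  have : mu (Ncyl s `\` A) <= mu (symdiff A B).
    apply: (mu_le_zero _ _ mS _ H0); [exact: measurableD|exact: measurableD|].
    move=> x [Nx Ax]; case: (pselect (B x)) => Bx; [right; right|left] => //.
  move=> le1; have := le_lt_trans (le_trans he2 le1) hB.
  by rewrite lte_fin lt_min ltxx andbF.
Qed.


Lemma Fs_dense
  (hmu : forall s : seq bool, mu (cylinder s) = ((2%:R : R) ^- size s)%:E) s :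
  malg_dense mu (Fs s).
Proof.
move=> A mA e e0.
pose q : R := ((2:R)^-1)%R.
have h2 : (`|q| < 1)%R by rewrite ger0_norm ?invr_ge0 // invf_lt1 ?ltr1n.
have e20 : (0 < e / 2)%R by rewrite divr_gt0.
have [N _ HN] := cvg_geometric 1%R h2 (lt_nbhsl e20).
pose t1 := s ++ true :: nseq N false.
pose t0 := s ++ false :: nseq N false.
have st b : size (s ++ b :: nseq N false) = (size s + N.+1)%N.
  by rewrite size_cat /= size_nseq.
set n := (size s + N.+1)%N.
have mut b : mu (Ncyl (s ++ b :: nseq N false)) = (q ^+ n)%:E.
  by rewrite /Ncyl hmu st exprVn.
have pn : (0 < q ^+ n)%R by rewrite exprn_gt0 // invr_gt0.
have ltn : (q ^+ n < e / 2)%R.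
  have := HN n; rewrite /= mul1r; apply; rewrite /n.
  by rewrite addnS; apply: leq_trans (leq_addl _ _) (leqnSn _).
have mu1 : mu (Ncyl t1) = (q ^+ n)%:E := mut true.
have mu0 : mu (Ncyl t0) = (q ^+ n)%:E := mut false.
have m1 : measurable (Ncyl t1) := cylinder_meas t1.
have m0 : measurable (Ncyl t0) := cylinder_meas t0.
have mN : measurable (Ncyl s) := cylinder_meas s.
have dis : Ncyl t1 `&` Ncyl t0 = set0 by exact: cylinder_disj.
pose B := (A `|` Ncyl t1) `\` Ncyl t0.
have mB : measurable B by apply: measurableD => //; apply: measurableU.
exists B.
  split => //; split.
  - have sub : Ncyl t1 `<=` B `&` Ncyl s.
      move=> x Hx; split; last exact: cylinder_cat Hx.
      split; first by right.
      by move=> H0; have : (Ncyl t1 `&` Ncyl t0) x by []; rewrite dis.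
    have := le_measure mu _ _ sub; rewrite !inE => /(_ m1 (measurableI _ _ mB mN)).
    move=> le H0; move: le; rewrite [X in _ <= X](_ : _ = 0%E) // [X in X <= _](_ : _ = (q ^+ n)%:E) //.
    by rewrite lee_fin leNgt pn.
  - have sub : Ncyl t0 `<=` Ncyl s `\` B.
      move=> x Hx; split; first exact: cylinder_cat Hx.
      by move=> [].
    have := le_measure mu _ _ sub; rewrite !inE => /(_ m0 (measurableD mN mB)).
    move=> le H0; move: le; rewrite [X in _ <= X](_ : _ = 0%E) // [X in X <= _](_ : _ = (q ^+ n)%:E) //.
    by rewrite lee_fin leNgt pn.
have sub : symdiff A B `<=` Ncyl t1 `|` Ncyl t0.
  move=> x [[Ax NB]|[[[Ax|N1] N0] NA]] //; last by left.
  case: (pselect (Ncyl t0 x)) => H0; first by right.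
  by exfalso; apply: NB; split => //; left.
have mU : measurable (Ncyl t1 `|` Ncyl t0) by apply: measurableU.
apply: (le_lt_trans (le_measure mu _ _ sub)); rewrite ?inE //.
  exact: symdiff_meas.
apply: (le_lt_trans (measureU2 mu m1 m0)).
rewrite [X in X + _](_ : _ = (q ^+ n)%:E) // [X in _ + X](_ : _ = (q ^+ n)%:E) // -EFinD lte_fin.
by rewrite [e](splitr e) ltrD.
Qed.

End meas.

Theorem theorem1p6 (R : realType) (mu : {measure set BorelCantor -> \bar R})
  (hmu : forall s : seq bool, mu (cylinder s) = ((2%:R : R) ^- size s)%:E) :
  malg_comeager mu
    [set A : set BorelCantor | measurable A /\
       ~ (exists D : set cantor_space, Delta02 D /\ mu (symdiff A D) = 0%E)].
Proof.
pose F n := if @unpickle (seq bool) n is Some s then Fs R mu s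
            else [set A : set BorelCantor | measurable A].
exists F.
  move=> n; rewrite /F; case: unpickle => [s|].
    by split; [exact: Fs_open|exact: Fs_dense].
  split; first by split => // A mA; exists 1%R => //.
  move=> A mA e e0; exists A => //.
  by rewrite /symdiff setDv setU0 measure0 lte_fin.
move=> A mA HF; split => //.
have HA s : Fs R mu s A by have := HF (pickle s); rewrite /F pickleK.
move=> [D [[[Fc cFc DFc] [Gd oGd DGd]] hD]].
pose G n := if odd n then ~` Gd n./2 else Fc n./2.
have cG n : closed (G n) by rewrite /G; case: odd; [rewrite closedC|].
have cov z : exists n, G n z.
  case: (pselect (D z)) => Dz.
    move: Dz; rewrite DFc => -[i _ Fi]; exists i.*2.
    by rewrite /G odd_double doubleK.
  have [i Ni] : exists i, ~ Gd i z.
    apply: contrapT => /forallNP H'; apply: Dz; rewrite DGd => i _.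
    exact: contrapT (H' i).
  by exists i.*2.+1; rewrite /G /= odd_double /= uphalf_double.
have mD : measurable (D : set BorelCantor).
  rewrite DFc; apply: bigcupT_measurable => i; exact: closed_meas.
have [n [x [k sub]]] := baire_cantor _ cG cov.
pose s := mkseq x k.
have subs : Ncyl s `<=` G n.
  move=> y Hy; apply: sub => i ik; rewrite Hy ?size_mkseq // nth_mkseq //.
have [_ [h1 h2]] := HA s.
have mS := symdiff_meas mA mD.
have mN : measurable (Ncyl s) := cylinder_meas s.
have m0 : measurable (set0 : set BorelCantor) := measurable0.
rewrite /G in subs; case: (odd n) in subs.
- apply: h1; apply/eqP; rewrite eq_le measure_ge0 andbT.
  have sub' : A `&` Ncyl s `<=` symdiff A D `|` set0.
    move=> y [Ay Ny]; left; left; split => // Dy.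
    have := subs y Ny; apply; rewrite DGd in Dy; exact: Dy.
  apply: (le_trans (@mu_le_zero R mu _ _ _ _ mS m0 sub' hD)); rewrite ?measure0 //.
  exact: measurableI.
- apply: h2; apply/eqP; rewrite eq_le measure_ge0 andbT.
  have sub' : Ncyl s `\` A `<=` symdiff A D `|` set0.
    move=> y [Ny Ay]; left; right; split => //.
    by rewrite DFc; exists n./2 => //; apply: subs.
  apply: (le_trans (@mu_le_zero R mu _ _ _ _ mS m0 sub' hD)); rewrite ?measure0 //.
  exact: measurableD.
Qed.
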